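(* Let $W_1,W_2,\dots$ be graphons on $\Omega$ with $\|W_n-W\|_\square\to0$ for a graphon $W$. Let $A_n,B_n\subseteq\Omega$ be measurable sets with $\int_{A_n\times B_n}W_n\,d\mu^2=0$ for every $n$, and suppose that $\mathbf{1}_{A_n}$ converges weak* to $a\in L^\infty(\Omega)$ and $\mathbf{1}_{B_n}$ converges weak* to $b\in L^\infty(\Omega)$. Then $\int_{\mathrm{supp}(a)\times\mathrm{supp}(b)}W\,d\mu^2=0$.
   Context: $(\Omega,\mu)$ is an atomless standard probability space; a graphon is a symmetric measurable $W:\Omega^2\to[0,1]$. The cut norm is $\|U\|_\square=\sup_{S,T\subseteq\Omega}\left|\int_{S\times T}U\,d\mu^2\right|$. A sequence $g_n\in L^\infty(\Omega)$ converges weak* to $g$ if $\int_X g_n\,d\mu\to\int_X g\,d\mu$ for every measurable $X\subseteq\Omega$. For a measurable function $g$, $\mathrm{supp}(g)=\{x:g(x)\neq0\}$. *)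

(* Defs.v *)
From HB Require Import structures.
From mathcomp Require Import all_boot all_order all_algebra.
From mathcomp Require Import all_classical all_reals all_analysis.
Set Implicit Arguments. Unset Strict Implicit. Unset Printing Implicit Defensive.
Import Order.TTheory GRing.Theory Num.Theory.
Local Open Scope classical_set_scope.
Local Open Scope ring_scope.

Section defs.
Context (d : measure_display) (T : measurableType d) (R : realType)
        (P : probability T R).

Definition atomless : Prop :=
  forall A : set T, measurable A -> (0 < P A)%E ->
    exists B : set T, [/\ measurable B, B `<=` A, (0 < P B)%E & (P B < P A)%E].

Definition graphon (W : T * T -> R) : Prop :=
  [/\ measurable_fun setT W,
      (forall x y, W (x, y) = W (y, x)) &
      (forall z, 0 <= W z <= 1)].

Definition cut_norm (U : T * T -> R) : \bar R :=
  ereal_sup [set r : \bar R | exists S S' : set T,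
    [/\ measurable S, measurable S' &
        r = (`| \int[(P \x P)%E]_(z in S `*` S') (U z)%:E |)%E]].

Definition Linfty (g : T -> R) : Prop :=
  measurable_fun setT g /\ exists M : R, {ae P, forall x, `|g x| <= M}.

Definition weakstar_cvg (g : nat -> T -> R) (h : T -> R) : Prop :=
  forall X : set T, measurable X ->
    (fun n => \int[P]_(x in X) (g n x)%:E)%E @ \oo
      --> (\int[P]_(x in X) (h x)%:E)%E.

Definition supp (g : T -> R) : set T := [set x | g x != 0].

End defs.

(* Main.v *)
Require Import Defs.
From HB Require Import structures.
From mathcomp Require Import all_boot all_order all_algebra.
From mathcomp Require Import all_classical all_reals all_analysis.
From mathcomp Require Import measurable_realfun.
Import Order.TTheory GRing.Theory Num.Theory.
Import numFieldNormedType.Exports.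
Local Open Scope classical_set_scope.
Local Open Scope ring_scope.
Set Implicit Arguments. Unset Strict Implicit.

Section S.
Context d (T : measurableType d) (R : realType) (P : probability T R).
Local Notation mu := (P \x P)%E.
Local Open Scope ereal_scope.

Lemma prod_int (f g : T -> R) : P.-integrable setT (EFin \o f) ->
  P.-integrable setT (EFin \o g) ->
  mu.-integrable setT (fun z => (f z.1 * g z.2)%:E) /\
  \int[mu]_z (f z.1 * g z.2)%:E = (\int[P]_x (f x)%:E) * (\int[P]_x (g x)%:E).
Proof.
move=> intf intg.
have mf : measurable_fun setT f by apply/measurable_EFinP; exact: measurable_int intf.
have mg : measurable_fun setT g by apply/measurable_EFinP; exact: measurable_int intg.
have mF : measurable_fun setT (fun z : T * T => (f z.1 * g z.2)%:E).
  apply/measurable_EFinP; apply: measurable_funM.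
    exact: measurableT_comp mf measurable_fst.
  exact: measurableT_comp mg measurable_snd.
have iF : mu.-integrable setT (fun z => (f z.1 * g z.2)%:E).
  apply/integrable12ltyP => //.
  under eq_integral => x _.
    under eq_integral => y _ do rewrite /= normrM EFinM.
    rewrite ge0_integralZl_EFin//=; last exact: measurableT_comp (measurableT_comp _ mg).
    over.
  rewrite /= ge0_integralZr//=; last 2 first.
    exact: measurableT_comp (measurableT_comp _ mf).
    exact: integral_ge0.
  apply: lte_mul_pinfty.
    exact: integral_ge0.
    by rewrite fin_numElt (lt_le_trans _ (integral_ge0 _ _)) //= (integrableP _ _ _ intf).2.
  exact: (integrableP _ _ _ intg).2.
split => //.
rewrite -(integral12_prod_meas1 iF) /fubini_F /=.
under eq_integral => x _.
  under eq_integral => y _ do rewrite EFinM.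
  rewrite integralZl//.
  over.
have gfin := integrable_fin_num (measurableT) intg.
rewrite /= -(fineK gfin) integralZr//.
Qed.


Definition J (f g : T -> R) (E : set (T * T)) :=
  \int[mu]_(z in E) (f z.1 * g z.2)%:E.

Lemma int_restr (f : T -> R) S : measurable S ->
  P.-integrable setT (EFin \o f) -> P.-integrable setT (EFin \o (f \_ S)).
Proof.
move=> mS intf; rewrite -restrict_EFin; apply/(integrable_mkcond _ mS).
exact: (integrableS measurableT mS (@subsetT _ _) intf).
Qed.

Lemma J_rect (f g : T -> R) S S' : measurable S -> measurable S' ->
  P.-integrable setT (EFin \o f) -> P.-integrable setT (EFin \o g) ->
  J f g (S `*` S') = (\int[P]_(x in S) (f x)%:E) * (\int[P]_(x in S') (g x)%:E).
Proof.
move=> mS mS' intf intg; rewrite /J integral_mkcond.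
have -> : (fun z : T * T => (f z.1 * g z.2)%:E) \_ (S `*` S') =
    fun z => ((f \_ S) z.1 * (g \_ S') z.2)%:E.
  apply/funext => -[x y]; rewrite /patch /= in_setX /=.
  by case: (x \in S); case: (y \in S') => /=; rewrite ?mul0r ?mulr0.
have [_ ->] := prod_int (int_restr mS intf) (int_restr mS' intg).
rewrite [in RHS]integral_mkcond [X in _ = _ * X]integral_mkcond.
by rewrite !restrict_EFin.
Qed.


Lemma mu_setT : mu setT = 1.
Proof.
rewrite -setXTT product_measure1E //; transitivity (1 * 1 : \bar R); last exact: mule1.
by congr (_ * _); exact: probability_setT.
Qed.

Lemma mu_lty E : measurable E -> mu E < +oo.
Proof.
move=> mE; rewrite (@le_lt_trans _ _ (mu setT)) //.
  by apply: le_measure => //; rewrite inE.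
by rewrite mu_setT ltry.
Qed.

Lemma J_int f g E : measurable E -> P.-integrable setT (EFin \o f) ->
  P.-integrable setT (EFin \o g) ->
  mu.-integrable E (fun z => (f z.1 * g z.2)%:E).
Proof.
move=> mE intf intg.
exact: (integrableS measurableT mE (@subsetT _ _) (prod_int intf intg).1).
Qed.

Lemma J_fin f g E : measurable E -> P.-integrable setT (EFin \o f) ->
  P.-integrable setT (EFin \o g) -> J f g E \is a fin_num.
Proof. by move=> mE intf intg; exact: (integrable_fin_num mE (J_int mE intf intg)). Qed.

Lemma J_bound (f g : T -> R) (E : set (T * T)) : measurable E -> (forall x, `|f x| <= 1)%R ->
  (forall x, `|g x| <= 1)%R -> measurable_fun setT f -> measurable_fun setT g ->
  `|J f g E| <= mu E.
Proof.
move=> mE f1 g1 mf mg.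
have mF : measurable_fun E (fun z : T * T => (f z.1 * g z.2)%:E).
  apply: (measurable_funS measurableT (@subsetT _ _)).
  apply/measurable_EFinP; apply: measurable_funM.
    exact: measurableT_comp mf measurable_fst.
  exact: measurableT_comp mg measurable_snd.
apply: (le_trans (le_abse_integral _ mE mF)).
rewrite -[mu E]mul1e -integral_cst//.
apply: ge0_le_integral => //.
- exact: measurableT_comp mF.
- move=> z _; rewrite /= lee_fin normrM; apply: mulr_ile1 => //.
Qed.


Lemma J_C (h k : T -> R) S : measurable S -> P.-integrable setT (EFin \o h) ->
  P.-integrable setT (EFin \o k) -> J h k (~` S) = J h k setT - J h k S.
Proof.
move=> mS ih ik; have Jf := J_fin mS ih ik; rewrite /J in Jf *.
have mC : measurable (~` S) := measurableC mS.
have := @integral_setU _ _ _ mu S (~` S) (fun z => (h z.1 * k z.2)%:E) mS mC.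
rewrite setUv => ->.
- by rewrite addeAC subee // add0e.
- exact: measurable_int (J_int measurableT ih ik).
- exact/disj_setPCl.
Qed.

Lemma J_conv (fn gn : nat -> T -> R) (f g : T -> R) :
  (forall n, P.-integrable setT (EFin \o fn n)) ->
  (forall n, P.-integrable setT (EFin \o gn n)) ->
  P.-integrable setT (EFin \o f) -> P.-integrable setT (EFin \o g) ->
  (forall n x, `|fn n x| <= 1)%R -> (forall n x, `|gn n x| <= 1)%R ->
  (forall S S', measurable S -> measurable S' ->
     J (fn n) (gn n) (S `*` S') @[n --> \oo] --> J f g (S `*` S')) ->
  forall E, measurable E -> J (fn n) (gn n) E @[n --> \oo] --> J f g E.
Proof.
move=> ifn ign intf intg fn1 gn1 hrect E mE.
have mfn n : measurable_fun setT (fn n).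
  by apply/measurable_EFinP; exact: measurable_int (ifn n).
have mgn n : measurable_fun setT (gn n).
  by apply/measurable_EFinP; exact: measurable_int (ign n).
pose G := [set A `*` B | A in @measurable _ T & B in @measurable _ T].
apply: (@dynkin_induction _ _ G
  (fun E => J (fn n) (gn n) E @[n --> \oo] --> J f g E) _ _ _ _ _ _ E).
- exact: measurable_prod_measurableType.
- move=> _ _ [A mA [B mB <-]] [C mC [D mD <-]]; rewrite -setXI.
  exists (A `&` C); first exact: measurableI.
  by exists (B `&` D) => //; exact: measurableI.
- rewrite -setXTT; exact: hrect.
- by move=> _ [A mA [B mB <-]]; exact: hrect.
- move=> S mS hS.
  rewrite (J_C mS intf intg).
  under eq_fun do rewrite (J_C mS (ifn _) (ign _)).
  apply: cvgeB.
  + by apply: fin_num_adde_defl; rewrite fin_numN (J_fin mS intf intg).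
  + by rewrite -setXTT; exact: hrect.
  + exact: hS.
- move=> F mF tF hF.
  have mU : measurable (\bigcup_k F k) := bigcupT_measurable F mF.
  have JU h k : P.-integrable setT (EFin \o h) -> P.-integrable setT (EFin \o k) ->
      J h k (\bigcup_k F k) = \int[counting]_i J h k (F i).
    move=> ih ik; rewrite integral_count; last first.
      exact: integrable_summable tF mF (J_int mU ih ik).
    exact: integral_bigcup tF mF (J_int mU ih ik).
  rewrite JU //; under eq_fun do rewrite JU //.
  have h1 : \forall x \ae (@counting nat R), setT x ->
      J (fn n) (gn n) (F x) @[n --> \oo] --> J f g (F x).
    by apply: aeW => i _; exact: hF.
  have h2 : (@counting nat R).-integrable setT (fun i => mu (F i)).
    apply/integrableP; split => //.
    under eq_integral do rewrite gee0_abs //.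
    rewrite ge0_integral_count //.
    rewrite [X in X < _](_ : _ = mu (\bigcup_k F k)); first exact: mu_lty.
    rewrite measure_bigcup //.
    by apply: eq_eseriesl => i; rewrite in_setT.
  have h3 : \forall x \ae (@counting nat R), forall n, setT x ->
      `|J (fn n) (gn n) (F x)| <= mu (F x).
    by apply: aeW => i n _; exact: J_bound.
  have [_ _ hc] := @dominated_convergence _ _ R (@counting nat R) setT measurableT
    (fun n i => J (fn n) (gn n) (F i)) (fun i => J f g (F i)) (fun i => mu (F i))
    (fun n => ltac:(by [])) ltac:(by []) h1 h2 h3.
  exact: hc.
by rewrite -measurable_prod_measurableType.
Qed.


Lemma Linfty_int (a : T -> R) : Linfty P a -> P.-integrable setT (EFin \o a).
Proof.
move=> [ma [M hM]]; apply/integrableP; split; first exact/measurable_EFinP.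
apply: (@le_lt_trans _ _ (`|M|%:E * P setT)).
  apply: integral_le_bound => //.
  - exact/measurable_EFinP.
  - apply: filterS hM => x hx _ /=; rewrite lee_fin.
    exact: (le_trans hx (ler_norm _)).
by rewrite (_ : P setT = 1) ?mule1 ?ltry //; exact: probability_setT.
Qed.

Lemma bnd_int (h : T * T -> R) D : measurable D -> measurable_fun setT h ->
  (forall z, `|h z| <= 1)%R -> mu.-integrable D (EFin \o h).
Proof.
move=> mD mh h1; apply/integrableP; split.
  by apply/measurable_EFinP; exact: (measurable_funS measurableT (@subsetT _ _)).
apply: (@le_lt_trans _ _ (1%:E * mu D)); last by rewrite mul1e mu_lty.
apply: integral_le_bound => //.
- by apply/measurable_EFinP; exact: (measurable_funS measurableT (@subsetT _ _)).
- by apply: aeW => z _ /=; rewrite lee_fin.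
Qed.

Lemma meas_pre d' (U : measurableType d') (h : U -> R) Y :
  measurable_fun setT h -> measurable Y -> measurable (h @^-1` Y).
Proof. by move=> mh mY; rewrite -[_ @^-1` _]setTI; exact: mh. Qed.


Lemma meas_gt (h : T * T -> R) r : measurable_fun setT h ->
  measurable [set z | (r < h z)%R].
Proof.
move=> mh; rewrite (_ : [set z | _] = h @^-1` `]r, +oo[%classic).
  exact: meas_pre.
by apply/seteqP; split => z /=; rewrite in_itv /= andbT.
Qed.

Lemma meas_supp (f : T -> R) : measurable_fun setT f -> measurable (supp f).
Proof.
move=> mf; rewrite (_ : supp f = f @^-1` (~` [set 0%R])).
  by apply: meas_pre => //; exact: measurableC.
by apply/seteqP; split => x /= /eqP.
Qed.

Lemma main_sec (Wn : nat -> T * T -> R) (W : T * T -> R)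
  (hWn : forall n, graphon (Wn n)) (hW : graphon W)
  (hcut : (fun n => cut_norm P (Wn n \- W)%R) @ \oo --> 0%E)
  (A B : nat -> set T) (mA : forall n, measurable (A n))
  (mB : forall n, measurable (B n))
  (h0 : forall n, (\int[(P \x P)%E]_(z in A n `*` B n) (Wn n z)%:E)%E = 0%E)
  (a b : T -> R) (ha : Linfty P a) (hb : Linfty P b)
  (hAa : weakstar_cvg P (fun n => \1_(A n)) a)
  (hBb : weakstar_cvg P (fun n => \1_(B n)) b) :
  (\int[(P \x P)%E]_(z in supp a `*` supp b) (W z)%:E)%E = 0%E.
Proof.
have ia := Linfty_int ha; have ib := Linfty_int hb.
have ma : measurable_fun setT a := ha.1.
have mb : measurable_fun setT b := hb.1.
have iA n : P.-integrable setT (EFin \o \1_(A n)) by exact: integrable_indic.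
have iB n : P.-integrable setT (EFin \o \1_(B n)) by exact: integrable_indic.
have ind1 (X : set T) x : (`|\1_X x| <= 1 :> R)%R.
  by rewrite indicE; case: (_ \in _); rewrite ?normr0 ?normr1.
have fint (f : T -> R) S : measurable S -> P.-integrable setT (EFin \o f) ->
    \int[P]_(x in S) (f x)%:E \is a fin_num.
  move=> mS intf; apply: (integrable_fin_num mS).
  exact: (integrableS measurableT mS (@subsetT _ _) intf).
have conv E : measurable E ->
    J (\1_(A n)) (\1_(B n)) E @[n --> \oo] --> J a b E.
  apply: J_conv => // S S' mS mS'.
  rewrite (J_rect mS mS' ia ib).
  under eq_fun do rewrite (J_rect mS mS' (iA _) (iB _)).
  apply: cvgeM; first by apply: mule_def_fin; exact: fint.
    exact: hAa.
  exact: hBb.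
case: hW => mW _ W01.
have W1 z : (`|W z| <= 1)%R by rewrite ger0_norm; case/andP: (W01 z).
have W0' z : (0 <= W z)%R by case/andP: (W01 z).
have cutb n : \int[mu]_(z in A n `*` B n) (W z)%:E <= cut_norm P (Wn n \- W)%R.
  have mAB := measurableX (mA n) (mB n).
  case: (hWn n) => mWn _ Wn01.
  have Wn1 z : (`|Wn n z| <= 1)%R by rewrite ger0_norm; case/andP: (Wn01 z).
  apply: (@le_trans _ _ (`| \int[mu]_(z in A n `*` B n) (((Wn n) \- W)%R z)%:E |)).
    rewrite (_ : \int[mu]_(z in A n `*` B n) (((Wn n) \- W)%R z)%:E =
       0 - \int[mu]_(z in A n `*` B n) (W z)%:E).
      by rewrite sub0e abseN gee0_abs // integral_ge0 // => z _; rewrite lee_fin.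
    under eq_integral do rewrite /= EFinB.
    by rewrite integralB_EFin // ?h0 //; exact: bnd_int.
  apply: ereal_sup_ubound; exists (A n), (B n); split => //.
pose D := supp a `*` supp b.
have mD : measurable D by apply: measurableX; exact: meas_supp.
pose Ek k := D `&` [set z | (k.+1%:R^-1 < W z)%R].
have mEk k : measurable (Ek k) by apply: measurableI => //; exact: meas_gt.
have Jn_le k n E : measurable E -> E `<=` Ek k ->
    J (\1_(A n)) (\1_(B n)) E <= k.+1%:R%:E * cut_norm P (Wn n \- W)%R.
  move=> mE EEk.
  have mAB := measurableX (mA n) (mB n).
  have mI : measurable_fun setT (fun z : T * T => (\1_(A n) z.1 * \1_(B n) z.2 : R)%R).
    apply: measurable_funM.
      apply: measurableT_comp; last exact: measurable_fst.
      by apply/measurable_indicP; exact: mA.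
    apply: measurableT_comp; last exact: measurable_snd.
    by apply/measurable_indicP; exact: mB.
  have mG : measurable_fun setT
      (fun z : T * T => (W z * (\1_(A n) z.1 * \1_(B n) z.2) : R)%R).
    exact: measurable_funM.
  have G0 z : (0 <= W z * (\1_(A n) z.1 * \1_(B n) z.2))%R.
    by rewrite !mulr_ge0.
  apply: (@le_trans _ _ (k.+1%:R%:E *
      \int[mu]_(z in A n `*` B n) (W z)%:E)); last first.
    by apply: lee_wpmul2l; [rewrite lee_fin|exact: cutb].
  rewrite /J.
  apply: (@le_trans _ _ (\int[mu]_(z in E)
      (k.+1%:R * (W z * (\1_(A n) z.1 * \1_(B n) z.2)))%:E)).
    apply: ge0_le_integral => //.
    - apply/measurable_EFinP.
      exact: (measurable_funS measurableT (@subsetT _ _) mI).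
    - apply/measurable_EFinP; apply: (measurable_funS measurableT (@subsetT _ _)).
      exact: measurable_funM.
    - move=> z Ez; rewrite lee_fin; have [_ /= Wz] := EEk z Ez.
      rewrite !indicE; case: (z.1 \in A n); case: (z.2 \in B n) => /=;
        rewrite ?mulr1n ?mulr0n ?mulr1 ?mul1r ?mulr0 ?mul0r //;
        try by rewrite !mulr_ge0.
      by rewrite -ler_pdivrMl // mulr1; exact: ltW.
  under eq_integral do rewrite EFinM.
  rewrite ge0_integralZl_EFin //; last 2 first.
  - by move=> z _; rewrite lee_fin.
  - apply/measurable_EFinP.
    exact: (measurable_funS measurableT (@subsetT _ _) mG).
  apply: lee_wpmul2l; first by rewrite lee_fin.
  apply: (@le_trans _ _ (\int[mu]_(z in setT)
      (W z * (\1_(A n) z.1 * \1_(B n) z.2))%:E)).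
    apply: ge0_subset_integral => //.
    - exact/measurable_EFinP.
    - by move=> z _; rewrite lee_fin.
  rewrite [X in _ <= X]integral_mkcond; apply: ge0_le_integral => //.
  - by move=> z _; rewrite lee_fin.
  - exact/measurable_EFinP.
  - have mWE : measurable_fun setT (fun z : T * T => (W z)%:E).
      exact/measurable_EFinP.
    exact: (measurable_restrictT _ mAB).1
      (measurable_funS measurableT (@subsetT _ _) mWE).
  - move=> [x y] _; rewrite /patch in_setX !indicE /=.
    by case: (x \in A n); case: (y \in B n) => /=;
      rewrite ?mulr1n ?mulr0n ?mulr1 ?mul1r ?mulr0 ?mul0r.
have J0 k E : measurable E -> E `<=` Ek k -> J a b E = 0.
  move=> mE EEk.
  have hs : J (\1_(A n)) (\1_(B n)) E @[n --> \oo] --> 0.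
    apply: (@squeeze_cvge _ _ _ _ (cst 0) _
      (fun n => k.+1%:R%:E * cut_norm P (Wn n \- W)%R)).
    - apply: nearW => n; apply/andP; split; last exact: Jn_le.
      apply: integral_ge0 => z _; rewrite lee_fin mulr_ge0 //.
    - exact: cvg_cst.
    - rewrite -(mule0 k.+1%:R%:E); exact: cvgeZl.
  exact: cvg_unique (conv E mE) hs.
have Ek0 k : mu (Ek k) = 0.
  have := @integral_ae_eq _ _ R mu (Ek k) (mEk k) (cst 0)
    (fun z => (a z.1 * b z.2)%:E) (J_int (mEk k) ia ib) (measurable_cst _) _.
  case.
    by move=> E EEk mE; rewrite integral0; exact: J0 EEk.
  move=> N [mN N0 sN].
  apply/eqP; rewrite eq_le measure_ge0 andbT -N0.
  apply: le_measure; rewrite ?inE //.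
  move=> z Ekz; apply: sN => /= /(_ Ekz) /eqP; rewrite eqe mulf_eq0.
  by case: Ekz => -[/= /negbTE -> /negbTE ->].
have W0 : mu (D `&` [set z | (0 < W z)%R]) = 0.
  apply/eqP; rewrite eq_le measure_ge0 andbT.
  have mX : measurable (D `&` [set z | (0 < W z)%R]).
    by apply: measurableI => //; exact: meas_gt.
  apply: (le_trans (measure_sigma_subadditive _ mEk mX _)).
    move=> z [Dz /= Wz]; have [k hk] := ltr_add_invr Wz.
    by exists k => //; split => //=; rewrite add0r in hk.
  by rewrite eseries0 // => i _ _; exact: Ek0.
apply/eqP; rewrite eq_le integral_ge0 ?andbT; last by move=> z _; rewrite lee_fin.
rewrite -W0 setIC -integral_indic; last exact: meas_gt.
apply: ge0_le_integral => //.
- by move=> z _; rewrite lee_fin.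
- apply/measurable_EFinP; exact: (measurable_funS measurableT (@subsetT _ _)).
- apply/measurable_EFinP; apply: (measurable_funS measurableT (@subsetT _ _)).
  by apply: measurable_indic; exact: meas_gt.
- move=> z _; rewrite lee_fin indicE.
  case: (boolP (z \in _)); first by move=> _; case/andP: (W01 z).
  rewrite notin_setE /= => /negP; rewrite -leNgt => Wz.
  exact: Wz.
exact: mD.
Qed.

End S.

Unset Implicit Arguments.

Theorem claim4p3 (d : measure_display) (T : measurableType d) (R : realType)
  (P : probability T R) (hP : atomless P)
  (Wn : nat -> T * T -> R) (W : T * T -> R)
  (hWn : forall n, graphon (Wn n)) (hW : graphon W)
  (hcut : (fun n => cut_norm P (Wn n \- W)) @ \oo --> 0%E)
  (A B : nat -> set T) (mA : forall n, measurable (A n))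
  (mB : forall n, measurable (B n))
  (h0 : forall n, (\int[(P \x P)%E]_(z in A n `*` B n) (Wn n z)%:E)%E = 0%E)
  (a b : T -> R) (ha : Linfty P a) (hb : Linfty P b)
  (hAa : weakstar_cvg P (fun n => \1_(A n)) a)
  (hBb : weakstar_cvg P (fun n => \1_(B n)) b) :
  (\int[(P \x P)%E]_(z in supp a `*` supp b) (W z)%:E)%E = 0%E.
Proof.
exact: (main_sec hWn hW hcut mA mB h0 ha hb hAa hBb).
Qed.
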